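(* Let $M_{3/4}$ be the additive submonoid of $\mathbb{Q}$ generated by $\{(3/4)^n : n \in \mathbb{N}_0\}$. Let $f$ be a nonzero element of $\mathbb{Q}[M_{3/4}]$ such that some exponent $s$ in the support of $f$ satisfies the ACCP in $M_{3/4}$ (every ascending chain of principal ideals of $M_{3/4}$ starting at $s + M_{3/4}$ stabilizes). Then $f$ satisfies the ACCP in $\mathbb{Q}[M_{3/4}]$, i.e., every ascending chain of principal ideals of $\mathbb{Q}[M_{3/4}]$ starting at $f\,\mathbb{Q}[M_{3/4}]$ stabilizes.
   Context: $\mathbb{Q}[M_{3/4}]$ is the integral domain of polynomial expressions $\sum_{i} c_i x^{m_i}$ with nonzero $c_i \in \mathbb{Q}$ and distinct $m_i \in M_{3/4}$; the support of such an expression is the set of the $m_i$. *)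

(* Defs.v *)
From HB Require Import structures.
From mathcomp Require Import all_boot all_order all_algebra.
From mathcomp Require Import finmap.
Set Implicit Arguments. Unset Strict Implicit. Unset Printing Implicit Defensive.
Import Order.TTheory GRing.Theory Num.Theory.
Local Open Scope ring_scope.

Definition inM34 (q : rat) : Prop :=
  exists s : seq nat, q = \sum_(n <- s) (3%:R / 4%:R : rat) ^+ n.

Definition mdvd (t s : rat) : Prop := exists u, inM34 u /\ s = t + u.

Definition ACCP_M34 (s : rat) : Prop :=
  forall a : nat -> rat,
    (forall n, inM34 (a n)) -> a 0%N = s ->
    (forall n, mdvd (a n.+1) (a n)) ->
    exists N, forall n, (N <= n)%N -> mdvd (a n) (a n.+1).

Record QM34 := MkQM34 {
  coef : {fsfun rat -> rat with 0};
  coef_supp : forall m, m \in finsupp coef -> inM34 m }.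

Definition mulc (f g : QM34) (m : rat) : rat :=
  \sum_(a <- finsupp (coef f)) \sum_(b <- finsupp (coef g) | a + b == m)
     coef f a * coef g b.

Definition rdvd (g f : QM34) : Prop :=
  exists h : QM34, forall m, coef f m = mulc g h m.

Definition ACCP_QM34 (f : QM34) : Prop :=
  forall g : nat -> QM34, g 0%N = f ->
    (forall n, rdvd (g n.+1) (g n)) ->
    exists N, forall n, (N <= n)%N -> rdvd (g n) (g n.+1).

(* Main.v *)
Require Import Defs.
From mathcomp Require Import all_boot all_order all_algebra all_field.
From mathcomp Require Import finmap.
From Stdlib Require Import Classical IndefiniteDescription.
From mathcomp Require Import zify.
Import Order.TTheory GRing.Theory Num.Theory.
Local Open Scope ring_scope.

Notation rr := (3%:R / 4%:R : rat).

Definition nL (J : nat) (a : rat) : nat := `|numq (a * 4%:R ^+ J)|%N.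

Lemma nL_nat J a k : a * 4%:R ^+ J = k%:R -> nL J a = k.
Proof. by move=> H; rewrite /nL H -[k%:R]/((k%:Z)%:~R) numq_int. Qed.

Lemma term_nat (n J : nat) : (n <= J)%N ->
  rr ^+ n * 4%:R ^+ J = ((3 ^ n * 4 ^ (J - n))%N)%:R.
Proof.
move=> H; rewrite -(subnKC H) addKn exprD expr_div_n natrM !natrX.
rewrite mulrA -(mulrA (3%:R ^+ n)) mulVf ?mulr1 //.
by rewrite expf_neq0 // pnatr_eq0.
Qed.

Lemma inM_ge0 a : inM34 a -> 0 <= a.
Proof. by case=> s ->; apply: sumr_ge0 => i _; apply: exprn_ge0. Qed.

Lemma sum_nat (s : seq nat) J : (forall n, n \in s -> (n <= J)%N) ->
  (\sum_(n <- s) rr ^+ n) * 4%:R ^+ J = (\sum_(n <- s) 3 ^ n * 4 ^ (J - n))%N%:R.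
Proof.
move=> H; rewrite mulr_suml natr_sum big_seq [RHS]big_seq.
by apply: eq_bigr => n /H; apply: term_nat.
Qed.

Lemma inM_lev a : inM34 a -> exists L, forall J, (L <= J)%N -> a * 4%:R ^+ J = (nL J a)%:R.
Proof.
case=> s ->; exists (\max_(n <- s) n) => J HJ.
have H : forall n, n \in s -> (n <= J)%N.
  move=> n Hn; apply: leq_trans HJ; exact: leq_bigmax_seq.
by rewrite (nL_nat _ _ _ (@sum_nat s J H)) (@sum_nat s J H).
Qed.

Lemma inM_term a : inM34 a -> exists s, a = \sum_(k <- s) rr ^+ k /\
   forall k, k \in s -> rr ^+ k <= a.
Proof.
case=> s ->; exists s; split => // k Hk.
rewrite (perm_big _ (perm_to_rem Hk)) big_cons lerDl.
by apply: sumr_ge0 => i _; apply: exprn_ge0.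
Qed.

Lemma inM_dvd3 a m J k : inM34 a -> a < rr ^+ m -> a * 4%:R ^+ J = k%:R ->
  (3 ^ m.+1 %| k)%N.
Proof.
move=> Ha Hlt Hk; have [s [Hs Hle]] := inM_term _ Ha.
pose J' := (J + \max_(n <- s) n)%N.
have H : forall n, n \in s -> (n <= J')%N.
  move=> n Hn; apply: leq_trans (leq_addl J _); exact: leq_bigmax_seq.
have E := @sum_nat s J' H; rewrite -Hs in E.
have E2 : a * 4%:R ^+ J' = (k * 4 ^ (J' - J))%N%:R.
  by rewrite /J' addKn exprD mulrA Hk natrM natrX.
rewrite E2 in E; move/eqP: E; rewrite eqr_nat => /eqP E.
have : (3 ^ m.+1 %| k * 4 ^ (J' - J))%N.
  rewrite E big_seq; apply: dvdn_sum => n Hn; apply: dvdn_mulr.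
  apply: dvdn_exp2l; rewrite ltnNge; apply/negP => Hnm.
  have := Hle n Hn; have : rr ^+ m <= rr ^+ n.
    by apply: ler_wiXn2l => //; rewrite ler_pdivrMr // mul1r ler_nat.
  move=> h1 h2; have := le_lt_trans (le_trans h1 h2) Hlt; by rewrite ltxx.
rewrite Gauss_dvdl //; apply: coprimeXr; apply: coprimeXl; by [].
Qed.

Lemma sum_eq1 (R : nzRingType) (T : eqType) (s : seq T) (F : T -> R) x :
  uniq s -> \sum_(a <- s) F a * (a == x)%:R = if x \in s then F x else 0.
Proof.
elim: s => [|y s IH] /=; first by rewrite big_nil.
move=> /andP [ys us]; rewrite big_cons IH // in_cons.
case: (eqVneq y x) => [<-|ne] /=; first by rewrite (negPf ys) mulr1 addr0.
by rewrite mulr0 add0r.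
Qed.

Definition cov J (g : QM34) := forall a, a \in finsupp (coef g) ->
  a * 4%:R ^+ J = (nL J a)%:R.

Definition phi J (g : QM34) : {poly algC} :=
  \sum_(a <- finsupp (coef g)) ratr (coef g a) *: 'X^(nL J a).

Lemma seq_lev (s : seq rat) : (forall a, a \in s -> inM34 a) ->
  exists L, forall J, (L <= J)%N -> forall a, a \in s -> a * 4%:R ^+ J = (nL J a)%:R.
Proof.
elim: s => [|x s IH] H.
  by exists 0%N => J _ a; rewrite in_nil.
have [L1 H1] : exists L, _ := IH (fun a ha => H a (@mem_behead _ (x :: s) a ha)).
have [L2 H2] := inM_lev _ (H x (mem_head _ _)).
exists (maxn L1 L2) => J HJ a; rewrite in_cons => /orP [/eqP ->|ha].
  by apply: H2; apply: leq_trans HJ; apply: leq_maxr.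
by apply: H1 => //; apply: leq_trans HJ; apply: leq_maxl.
Qed.

Lemma cov_exists g : exists L, forall J, (L <= J)%N -> cov J g.
Proof.
have [L HL] := @seq_lev (enum_fset (finsupp (coef g))) (fun a ha => @coef_supp g a ha).
by exists L => J HJ a ha; apply: HL.
Qed.

Lemma cov_mono K J g : cov K g -> (K <= J)%N -> cov J g /\
  forall a, a \in finsupp (coef g) -> nL J a = (nL K a * 4 ^ (J - K))%N.
Proof.
move=> H HKJ.
have E : forall a, a \in finsupp (coef g) ->
   a * 4%:R ^+ J = (nL K a * 4 ^ (J - K))%N%:R.
  by move=> a ha; rewrite -(subnKC HKJ) addKn exprD mulrA H // natrM natrX.
split=> a ha; last by apply: nL_nat; apply: E.
by rewrite E // (nL_nat _ _ _ (E a ha)).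
Qed.

Lemma nL_eq J g a i : cov J g -> a \in finsupp (coef g) ->
  (i == nL J a) = (a == i%:R / 4%:R ^+ J).
Proof.
move=> H ha; have n0 : (4%:R ^+ J : rat) != 0 by rewrite expf_neq0 // pnatr_eq0.
rewrite -(eqr_nat rat) -H //; apply/eqP/eqP => [->|->]; first by rewrite mulfK.
by rewrite divfK.
Qed.

Lemma coef_phi J g i : cov J g ->
  (phi J g)`_i = ratr (coef g (i%:R / 4%:R ^+ J)).
Proof.
move=> H; rewrite /phi coef_sum.
rewrite big_seq (eq_bigr (fun a => ratr (coef g a) * (a == i%:R / 4%:R ^+ J)%:R)); last first.
  by move=> a ha; rewrite coefZ coefXn (nL_eq _ _ _ _ H ha).
rewrite -big_seq sum_eq1 ?fset_uniq //.
case: finsuppP => //; by rewrite rmorph0.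
Qed.

Lemma nL_add J g h a b i : cov J g -> cov J h ->
  a \in finsupp (coef g) -> b \in finsupp (coef h) ->
  (i == (nL J a + nL J b)%N) = (a + b == i%:R / 4%:R ^+ J).
Proof.
move=> Hg Hh ha hb; have n0 : (4%:R ^+ J : rat) != 0 by rewrite expf_neq0 // pnatr_eq0.
rewrite -(eqr_nat rat) natrD -Hg // -Hh // -mulrDl.
apply/eqP/eqP => [->|->]; first by rewrite mulfK.
by rewrite divfK.
Qed.

Lemma phiM J f g h : cov J g -> cov J h -> cov J f ->
  (forall m, coef f m = mulc g h m) -> phi J f = phi J g * phi J h.
Proof.
move=> Hg Hh Hf E; apply/polyP => i.
rewrite coef_phi // E /mulc rmorph_sum /phi mulr_suml coef_sum.
rewrite big_seq [RHS]big_seq; apply: eq_bigr => a ha.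
rewrite mulr_sumr coef_sum rmorph_sum big_mkcond /= big_seq [RHS]big_seq.
apply: eq_bigr => b hb.
rewrite -scalerAl -scalerAr scalerA -exprD coefZ coefXn (nL_add _ _ _ _ _ _ Hg Hh ha hb).
by case: eqP => _; rewrite ?rmorphM ?mulr1 ?mulr0 ?rmorph0.
Qed.

Lemma horner_phi J g u : (phi J g).[u] =
  \sum_(a <- finsupp (coef g)) ratr (coef g a) * u ^+ (nL J a).
Proof.
by rewrite /phi horner_sum; apply: eq_bigr => a _; rewrite hornerZ hornerXn.
Qed.

Lemma coef_size (p : {poly algC}) i : p`_i != 0 -> (i < size p)%N.
Proof. by move=> H; rewrite ltnNge; apply/negP => /leq_sizeP /(_ i (leqnn i)) /eqP; apply/negP. Qed.

Lemma phi_lower J g e : cov J g -> e \in finsupp (coef g) ->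
  (nL J e < size (phi J g))%N.
Proof.
move=> H he; apply: coef_size; rewrite coef_phi // -H // mulfK ?expf_neq0 ?pnatr_eq0 //.
by rewrite fmorph_eq0 -mem_finsupp.
Qed.

Lemma phi_neq0 J g e : cov J g -> e \in finsupp (coef g) -> phi J g != 0.
Proof.
move=> H he; apply/eqP => E; have := phi_lower _ _ _ H he; by rewrite E size_poly0.
Qed.

Lemma phi_upper J f D : cov J f -> (forall a, a \in finsupp (coef f) -> a <= D) ->
  phi J f != 0 -> ((size (phi J f)).-1)%:R <= D * 4%:R ^+ J.
Proof.
move=> H HD nz; have n0 : (4%:R ^+ J : rat) != 0 by rewrite expf_neq0 // pnatr_eq0.
have : lead_coef (phi J f) != 0 by rewrite lead_coef_eq0.
rewrite /lead_coef coef_phi // fmorph_eq0 -mem_finsupp => /HD.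
by rewrite ler_pdivrMr // exprn_gt0 // ltr0n.
Qed.

Lemma mulc_nz g h m : mulc g h m != 0 -> exists b c,
  [/\ b \in finsupp (coef g), c \in finsupp (coef h) & b + c = m].
Proof.
move=> H; apply: NNPP => Hno; move/negP: H; apply; apply/eqP.
rewrite /mulc big1_seq // => b /andP [_ hb]; rewrite big1_seq // => c /andP [/eqP hbc hc].
by exfalso; apply: Hno; exists b, c.
Qed.

Lemma mulc_const b h m : (forall e, e \in finsupp (coef h) -> e = 0) ->
  mulc b h m = coef b m * coef h 0.
Proof.
move=> H; rewrite /mulc.
rewrite (eq_bigr (fun a => coef b a * coef h 0 * (a == m)%:R)); last first.
  move=> a _; rewrite big_mkcond /= big_seq.
  rewrite (eq_bigr (fun c => (coef b a * coef h 0 * (a == m)%:R) * (c == 0)%:R)); last first.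
    move=> c hc; rewrite (H c hc) addr0 eqxx mulr1.
    by case: eqP => _; rewrite ?mulr1 ?mulr0.
  rewrite -big_seq sum_eq1 ?fset_uniq //; case: finsuppP => // h0.
  by rewrite !(mulr0, mul0r).
by rewrite sum_eq1 ?fset_uniq //; case: finsuppP => // hm; rewrite mul0r.
Qed.

Definition cfun (c : rat) : {fsfun rat -> rat with 0} :=
  [fsfun x in [fset (0:rat)]%fset => c].

Lemma cfunE c x : cfun c x = if x == 0 then c else 0.
Proof. rewrite /cfun fsfun_fun inE. reflexivity. Qed.

Lemma cfun_supp c x : x \in finsupp (cfun c) -> x = 0.
Proof. rewrite mem_finsupp cfunE; case: ifP => [/eqP -> | _] //; by rewrite eqxx. Qed.

Lemma cfun_supp_M c x : x \in finsupp (cfun c) -> inM34 x.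
Proof. by move/cfun_supp => ->; exists [::]; rewrite big_nil. Qed.

Definition cQ (c : rat) : QM34 := @MkQM34 (cfun c) (@cfun_supp_M c).

Lemma const_div (a b h : QM34) : (forall m, coef a m = mulc b h m) ->
  0 \in finsupp (coef h) -> (forall e, e \in finsupp (coef h) -> e = 0) -> rdvd a b.
Proof.
move=> E h0 H; exists (cQ (coef h 0)^-1) => m.
rewrite mulc_const; last by move=> e; apply: cfun_supp.
rewrite /= cfunE eqxx E mulc_const // mulfK //.
by rewrite mem_finsupp in h0.
Qed.

Section Chain.
Variables (g hh : nat -> QM34).
Hypothesis Hgh : forall n m, coef (g n) m = mulc (g n.+1) (hh n) m.
Variable s : rat.
Hypothesis Hs : s \in finsupp (coef (g 0)).
Hypothesis HA : ACCP_M34 s.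

Definition step n (a : rat) : rat :=
  head 0 [seq b <- enum_fset (finsupp (coef (g n.+1))) | (a - b) \in finsupp (coef (hh n))].

Fixpoint ch n : rat := if n is n'.+1 then step n' (ch n') else s.

Lemma step_spec n a : a \in finsupp (coef (g n)) ->
  step n a \in finsupp (coef (g n.+1)) /\ a - step n a \in finsupp (coef (hh n)).
Proof.
rewrite mem_finsupp Hgh => /mulc_nz [b [c [hb hc E]]].
rewrite /step; set l := [seq _ <- _ | _].
have Hl : b \in l by rewrite mem_filter -E addrC addKr hc.
have : head 0 l \in l by case: l Hl => [|x l'] //= _; rewrite mem_head.
by rewrite mem_filter => /andP [h1 h2].
Qed.

Lemma ch_spec n : ch n \in finsupp (coef (g n)) /\
  ch n - ch n.+1 \in finsupp (coef (hh n)).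
Proof.
suff H : ch n \in finsupp (coef (g n)) by split => //; apply: (proj2 (step_spec _ _ H)).
elim: n => [|n IH] //=; exact: (proj1 (step_spec _ _ IH)).
Qed.

Lemma stepA : exists N, forall n, (N <= n)%N -> 0 \in finsupp (coef (hh n)).
Proof.
have Hd0 : forall n, mdvd (ch n.+1) (ch n).
  move=> n; exists (ch n - ch n.+1); split; first exact: coef_supp (proj2 (ch_spec n)).
  by rewrite addrC subrK.
have [N HN] := HA ch (fun n => coef_supp (proj1 (ch_spec n))) erefl Hd0.
exists N => n /HN [u [Hu E]].
have Hd := proj2 (ch_spec n).
have : ch n - ch n.+1 = 0.
  apply/eqP; rewrite eq_le; apply/andP; split.
    by rewrite E opprD addrA subrr sub0r oppr_le0; apply: inM_ge0 _ Hu.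
  exact: inM_ge0 _ (coef_supp Hd).
by move=> H; rewrite H in Hd.
Qed.

Lemma cov_all n : exists L0, forall J, (L0 <= J)%N ->
  forall k, (k <= n)%N -> cov J (g k) /\ cov J (hh k).
Proof.
elim: n => [|n [L0 HL0]].
  have [L1 H1] := cov_exists (g 0); have [L2 H2] := cov_exists (hh 0).
  exists (maxn L1 L2) => J HJ k; rewrite leqn0 => /eqP ->; split.
    by apply: H1; apply: leq_trans HJ; apply: leq_maxl.
  by apply: H2; apply: leq_trans HJ; apply: leq_maxr.
have [L1 H1] := cov_exists (g n.+1); have [L2 H2] := cov_exists (hh n.+1).
exists (maxn L0 (maxn L1 L2)) => J HJ k; rewrite leq_eqVlt => /orP [/eqP ->|Hk].
  split.
    by apply: H1; apply: leq_trans HJ; apply: leq_trans (leq_maxr _ _); apply: leq_maxl.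
  by apply: H2; apply: leq_trans HJ; apply: leq_trans (leq_maxr _ _); apply: leq_maxr.
by apply: HL0 => //; apply: leq_trans HJ; apply: leq_maxl.
Qed.

Lemma root_prop L n u : (forall k, (k <= n.+1)%N -> cov L (g k) /\ cov L (hh k)) ->
  (phi L (hh n)).[u] = 0 -> (phi L (g 0)).[u] = 0.
Proof.
move=> Hc Hu.
have St : forall k, (k <= n)%N -> phi L (g k) = phi L (g k.+1) * phi L (hh k).
  move=> k Hk; apply: phiM; first exact: (Hc k.+1 Hk).1.
  - exact: (Hc k (leq_trans Hk (leqnSn _))).2.
  - exact: (Hc k (leq_trans Hk (leqnSn _))).1.
  exact: Hgh.
have : forall d, (d <= n)%N -> (phi L (g (n - d))).[u] = 0.
  elim=> [|d IH] Hd; first by rewrite subn0 St // hornerM Hu mulr0.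
  rewrite St ?leq_subr // hornerM subnSK // IH ?mul0r //; exact: ltnW.
by move=> /(_ n (leqnn n)); rewrite subnn.
Qed.

Lemma horner_scale K L f u : cov K f -> (K <= L)%N ->
  (phi L f).[u] = (phi K f).[u ^+ (4 ^ (L - K))].
Proof.
move=> HK HKL; have [_ HE] := cov_mono _ _ _ HK HKL.
rewrite !horner_phi big_seq [RHS]big_seq; apply: eq_bigr => a ha.
by rewrite HE // mulnC exprM.
Qed.


Lemma claim1 K n m0 : cov K (g 0) -> (size (phi K (g 0)) <= 3 ^ m0.+1)%N ->
  0 \in finsupp (coef (hh n)) ->
  (forall e, e \in finsupp (coef (hh n)) -> e < rr ^+ m0) ->
  forall e, e \in finsupp (coef (hh n)) -> e = 0.
Proof.
move=> HK Hsz h0 Hsm e1 he1; apply: NNPP => ne1.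
have [L0 HL0] := cov_all n.+1.
pose L := maxn L0 K.
have HL := HL0 L (leq_maxl _ _).
have HKL : (K <= L)%N by apply: leq_maxr.
have covh := (HL n (leqW (leqnn n))).2.
pose P := phi L (hh n).
have szP : size P != 1%N.
  have := phi_lower _ _ _ covh he1; rewrite -/P.
  case E: (nL L e1) => [|k].
    exfalso; apply: ne1; have := covh e1 he1; rewrite E => /eqP.
    by rewrite mulf_eq0 expf_eq0 pnatr_eq0 andbF orbF => /eqP.
  by case: (size P) => [|[|]].
have [b rb] := closed_rootP P szP.
have Pb : P.[b] = 0 by apply/eqP.
have b0 : b != 0.
  apply/eqP => E; move: Pb; rewrite E horner_coef0 /P coef_phi // mul0r => /eqP.
  by rewrite fmorph_eq0 => /eqP Hc; move: h0; rewrite mem_finsupp Hc eqxx.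
pose Q := (3 ^ m0.+1)%N.
have Q0 : (0 < Q)%N by rewrite expn_gt0.
have [w Hw] := C_prim_root_exists Q0.
have Hdiv : forall a, a \in finsupp (coef (hh n)) -> (Q %| nL L a)%N.
  move=> a ha; apply: (inM_dvd3 _ _ _ _ (coef_supp ha) (Hsm a ha) (covh a ha)).
have Hrot : forall i, P.[b * w ^+ i] = 0.
  move=> i; rewrite -Pb /P !horner_phi big_seq [RHS]big_seq; apply: eq_bigr => a ha.
  have [t ->] := dvdnP (Hdiv a ha).
  have Hw1 : w ^+ (i * (t * Q)) = 1.
    by rewrite mulnA mulnC exprM (prim_expr_order Hw) expr1n.
  by rewrite exprMn -exprM Hw1 mulr1.
have Hroot0 : forall i, (phi K (g 0)).[(b * w ^+ i) ^+ (4 ^ (L - K))] = 0.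
  move=> i; rewrite -(horner_scale _ _ _ _ HK HKL).
  apply: (root_prop _ _ _ HL); exact: Hrot.
pose E := (4 ^ (L - K))%N.
have HwE : Q.-primitive_root (w ^+ E).
  rewrite prim_root_exp_coprime //; apply: coprimeXl; apply: coprimeXr; by [].
pose rs := [seq (b * w ^+ i) ^+ E | i <- iota 0 Q].
have := @max_poly_roots _ (phi K (g 0)) rs (phi_neq0 _ _ _ HK Hs).
have -> : all (root (phi K (g 0))) rs.
  by apply/allP => x /mapP [i _ ->]; apply/eqP; apply: Hroot0.
have -> : uniq rs.
  rewrite map_inj_in_uniq ?iota_uniq // => i j; rewrite !mem_iota /= !add0n => Hi Hj.
  rewrite !exprMn => /(mulfI (expf_neq0 E b0)).
  rewrite -!exprM ![(_ * E)%N]mulnC !exprM => /eqP.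
  by rewrite (eq_prim_root_expr HwE) !modn_small // => /eqP.
rewrite size_map size_iota => /(_ erefl erefl) H.
by have := leq_trans H Hsz; rewrite ltnn.
Qed.


Definition bad (d : rat) k := has (fun e => d <= e) (finsupp (coef (hh k))).

Lemma claim2 n d D : 0 <= d ->
  (forall a, a \in finsupp (coef (g 0)) -> a <= D) ->
  (\sum_(k < n) (bad d k : nat))%N%:R * d <= D.
Proof.
move=> d0 HD.
have [L HL0] := cov_all n; have HL := HL0 L (leqnn L).
pose S k := (size (phi L (g k))).-1.
pose T k := (size (phi L (hh k))).-1.
have nzg : forall k, (k <= n)%N -> phi L (g k) != 0.
  by move=> k Hk; apply: (phi_neq0 _ _ _ (HL k Hk).1 (proj1 (ch_spec k))).
have nzh : forall k, (k <= n)%N -> phi L (hh k) != 0.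
  by move=> k Hk; apply: (phi_neq0 _ _ _ (HL k Hk).2 (proj2 (ch_spec k))).
have rec : forall k, (k < n)%N -> S k = (S k.+1 + T k)%N.
  move=> k Hk.
  have E : phi L (g k) = phi L (g k.+1) * phi L (hh k).
    apply: phiM; first exact: (HL k.+1 Hk).1.
    - exact: (HL k (ltnW Hk)).2.
    - exact: (HL k (ltnW Hk)).1.
    exact: Hgh.
  rewrite /S /T E size_mul ?nzg ?nzh //; last exact: ltnW.
  have := nzg _ Hk; have := nzh _ (ltnW Hk); rewrite -!size_poly_gt0.
  case: (size (phi L (g k.+1))) (size (phi L (hh k))) => [|a] [|b] //= _ _; by rewrite addnS.
have sum : forall j, (j <= n)%N -> S 0%N = (S j + \sum_(k < j) T k)%N.
  elim=> [|j IH] Hj; first by rewrite big_ord0 addn0.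
  rewrite big_ord_recr /= IH ?(ltnW Hj) // rec //; by rewrite -addnA (addnC (T j)).
have low : forall k, (k < n)%N -> bad d k -> d * 4%:R ^+ L <= (T k)%:R.
  move=> k Hk /hasP [e he Hde].
  have covk := (HL k (ltnW Hk)).2.
  have H1 : d * 4%:R ^+ L <= e * 4%:R ^+ L.
    by rewrite ler_pM2r // exprn_gt0 // ltr0n.
  rewrite (le_trans H1) //.
  rewrite covk // ler_nat -ltnS /T prednK ?phi_lower //.
  by rewrite size_poly_gt0; apply: nzh; apply: ltnW.
have up : (S 0%N)%:R <= D * 4%:R ^+ L.
  apply: phi_upper => //; first exact: (HL 0%N (leq0n _)).1.
  exact: nzg.
have p4 : (0 : rat) < 4%:R ^+ L by rewrite exprn_gt0 // ltr0n.
suff H : (\sum_(k < n) (bad d k : nat))%N%:R * d * 4%:R ^+ L <= D * 4%:R ^+ L.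
  by rewrite ler_pM2r in H.
rewrite -mulrA natr_sum mulr_suml.
apply: le_trans up; rewrite (sum n (leqnn n)) natrD.
rewrite -[X in X <= _]add0r; apply: lerD; first exact: ler0n.
rewrite natr_sum; apply: ler_sum => k _.
case Hb: (bad d k) => /=; last by rewrite mul0r.
by rewrite mul1r; apply: low.
Qed.


Lemma main : exists N, forall n, (N <= n)%N -> rdvd (g n) (g n.+1).
Proof.
have [N HN] := stepA.
have [K0 HK0] := cov_exists (g 0); have HK := HK0 K0 (leqnn _).
pose m0 := size (phi K0 (g 0)).
have Hsz : (m0 <= 3 ^ m0.+1)%N by apply: ltnW; apply: ltnW; apply: ltn_expl.
pose d := rr ^+ m0.
have d0 : 0 <= d by rewrite /d exprn_ge0 // divr_ge0 // ler0n.
pose D := \sum_(a <- finsupp (coef (g 0))) a.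
have D0 : 0 <= D.
  rewrite /D big_seq; apply: sumr_ge0 => a ha; exact: inM_ge0 _ (coef_supp ha).
have HD : forall a, a \in finsupp (coef (g 0)) -> a <= D.
  move=> a ha; rewrite /D (perm_big _ (perm_to_rem ha)) big_cons lerDl big_seq.
  apply: sumr_ge0 => b hb; apply: inM_ge0 _ (coef_supp (mem_rem hb)).
have fin : exists N', forall n, (N' <= n)%N -> ~~ bad d n.
  apply: NNPP => H.
  have inf : forall N', exists n, (N' <= n)%N /\ bad d n.
    move=> N'; apply: NNPP => H2; apply: H; exists N' => n Hn; apply/negP => Hb.
    by apply: H2; exists n.
  have mono : forall n dd, (\sum_(k < n) (bad d k : nat) <= \sum_(k < n + dd) (bad d k : nat))%N.
    move=> n; elim=> [|dd IH]; first by rewrite addn0.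
    by rewrite addnS big_ord_recr /=; apply: leq_trans IH (leq_addr _ _).
  have cnt : forall c, exists n, (c <= \sum_(k < n) (bad d k : nat))%N.
    elim=> [|c [n Hn]]; first by exists 0%N.
    have [n' [Hn' Hb]] := inf n; exists n'.+1.
    rewrite big_ord_recr /= Hb addn1 ltnS; apply: leq_trans Hn _.
    by have := mono n (n' - n)%N; rewrite subnKC.
  have [Dn HDn] : exists Dn : nat, D < Dn%:R.
    by exists (Num.Def.archi_bound D); apply: archi_boundP.
  pose c := (Dn * 4 ^ m0).+1.
  have [n Hn] := cnt c.
  have C2 := claim2 n d D d0 HD.
  have e1 : (c%:R : rat) * d <= D.
    apply: le_trans C2; by rewrite ler_wpM2r // ler_nat.
  have e2 : d * 4%:R ^+ m0 = (3 ^ m0)%N%:R.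
    by rewrite /d (term_nat m0 m0 (leqnn _)) subnn expn0 muln1.
  have p4 : (0 : rat) < 4%:R ^+ m0 by rewrite exprn_gt0 // ltr0n.
  have e3 : (c * 3 ^ m0)%N%:R <= D * 4%:R ^+ m0.
    by rewrite natrM -e2 mulrA ler_pM2r.
  have e4 : D * 4%:R ^+ m0 < (Dn * 4 ^ m0)%N%:R by rewrite natrM natrX ltr_pM2r.
  have := le_lt_trans e3 e4; rewrite ltr_nat => H3.
  have : (c <= c * 3 ^ m0)%N by rewrite leq_pmulr // expn_gt0.
  rewrite /c in H3 *; lia.
have [N' HN'] := fin.
exists (maxn N N') => n Hn.
have hN : (N <= n)%N by apply: leq_trans Hn; apply: leq_maxl.
have hN' : (N' <= n)%N by apply: leq_trans Hn; apply: leq_maxr.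
apply: (const_div _ _ _ (Hgh n) (HN n hN)).
apply: (claim1 _ _ _ HK Hsz (HN n hN)) => e he.
have := HN' n hN'; rewrite /bad => /hasPn /(_ e he).
by rewrite ltNge.
Qed.

End Chain.

Theorem proposition4p8 (f : QM34) :
  coef f != [fsfun] ->
  (exists s : rat, s \in finsupp (coef f) /\ ACCP_M34 s) ->
  ACCP_QM34 f.
Proof.
move=> _ [s [Hs HA]] g Hg0 Hdiv.
pose hh n := proj1_sig (constructive_indefinite_description _ (Hdiv n)).
have Hgh : forall n m, coef (g n) m = mulc (g n.+1) (hh n) m.
  move=> n; exact: (proj2_sig (constructive_indefinite_description _ (Hdiv n))).
have Hs' : s \in finsupp (coef (g 0)) by rewrite Hg0.
exact: (@main g hh Hgh s Hs' HA).
Qed.
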